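(* Assume $b_1<n^*$ and $b_2<m^*$. Then: (1) The equilibrium payoffs of both players are the same in all Nash equilibria of $\Gamma(b_1,b_2)$, and for every Nash equilibrium $(\sigma^{1*},\sigma^{2*})$, $$\frac{b_1b_2}{n^*}\le U_1(\sigma^{1*},\sigma^{2*})\le\min\Bigl\{\frac{b_1b_2}{m^*},b_2\Bigr\},\qquad \max\Bigl\{0,b_2\Bigl(1-\frac{b_1}{m^*}\Bigr)\Bigr\}\le U_2(\sigma^{1*},\sigma^{2*})\le b_2\Bigl(1-\frac{b_1}{n^*}\Bigr).$$ (2) The expected detection rate $r(\sigma^* )$ takes the same value in all Nash equilibria $\sigma^*$ of $\Gamma(b_1,b_2)$, and $\frac{b_1}{n^*}\le r(\sigma^* )\le\min\{\frac{b_1}{m^*},1\}$.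
   Context: Detection model: finite nonempty sets $\mathcal V$, $\mathcal E$, monitoring sets $\mathcal C_i\subseteq\mathcal E$ ($i\in\mathcal V$) with every $e\in\mathcal E$ in some $\mathcal C_i$; $\mathcal C_S=\bigcup_{i\in S}\mathcal C_i$; $F(S,T)=|\mathcal C_S\cap T|$. Set cover: $S\subseteq\mathcal V$ with $\mathcal C_S=\mathcal E$; $n^*$ = minimum size of a set cover. Set packing: $T\subseteq\mathcal E$ with $|\mathcal C_i\cap T|\le1$ for all $i$; $m^*$ = maximum size of a set packing. Game $\Gamma(b_1,b_2)$ ($b_1,b_2$ positive integers): $\mathcal A_1=\{S\subseteq\mathcal V:|S|\le b_1\}$, $\mathcal A_2=\{T\subseteq\mathcal E:|T|\le b_2\}$; mixed strategies $\sigma^1\in\Delta(\mathcal A_1)$, $\sigma^2\in\Delta(\mathcal A_2)$ (independent); payoffs $U_1=\mathbb E[F(S,T)]$, $U_2=\mathbb E[|T|]-\mathbb E[F(S,T)]$; Nash equilibrium in mixed strategies as usual. The expected detection rate of a profile $\sigma=(\sigma^1,\sigma^2)$ whose attack strategy is supported on nonempty sets is $r(\sigma)=\mathbb E_{S\sim\sigma^1,T\sim\sigma^2}\bigl[F(S,T)/|T|\bigr]$ (in the equilibria considered here all attack plans in the support have size $b_2$). *)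

(* Defs.v *)
From HB Require Import structures.
From mathcomp Require Import all_boot all_order all_algebra.
Set Implicit Arguments. Unset Strict Implicit. Unset Printing Implicit Defensive.
Import Order.TTheory GRing.Theory Num.Theory.
Local Open Scope ring_scope.

Section Detection.
Variables (V E : finType) (C : V -> {set E}).

Definition coverset (S : {set V}) : {set E} := \bigcup_(i in S) C i.
Definition Fdet (S : {set V}) (T : {set E}) : nat := #|coverset S :&: T|.

Definition is_set_cover (S : {set V}) : bool := coverset S == [set: E].
Definition is_set_packing (T : {set E}) : bool :=
  [forall i, #|C i :&: T| <= 1]%N.

(* n* : minimum size of a set cover (the default #|V| is never the value
   when every edge is monitored, since [set: V] is then a cover) *)
Definition nstar : nat :=
  \big[minn/#|V|]_(S : {set V} | is_set_cover S) #|S|.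
Definition mstar : nat := \max_(T : {set E} | is_set_packing T) #|T|.

Variable R : realFieldType.

Definition mixed1 (b1 : nat) (s : {ffun {set V} -> R}) : Prop :=
  [/\ forall S : {set V}, 0 <= s S,
      \sum_(S : {set V}) s S = 1 &
      forall S : {set V}, (b1 < #|S|)%N -> s S = 0].
Definition mixed2 (b2 : nat) (s : {ffun {set E} -> R}) : Prop :=
  [/\ forall T : {set E}, 0 <= s T,
      \sum_(T : {set E}) s T = 1 &
      forall T : {set E}, (b2 < #|T|)%N -> s T = 0].

Definition U1 (s1 : {ffun {set V} -> R}) (s2 : {ffun {set E} -> R}) : R :=
  \sum_(S : {set V}) \sum_(T : {set E}) s1 S * s2 T * (Fdet S T)%:R.
Definition U2 (s1 : {ffun {set V} -> R}) (s2 : {ffun {set E} -> R}) : R :=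
  \sum_(S : {set V}) \sum_(T : {set E}) s1 S * s2 T * ((#|T|)%:R - (Fdet S T)%:R).

(* expected detection rate; uses MathComp's convention x / 0 = 0, which is
   irrelevant when the attack strategy is supported on nonempty sets *)
Definition detection_rate (s1 : {ffun {set V} -> R}) (s2 : {ffun {set E} -> R}) : R :=
  \sum_(S : {set V}) \sum_(T : {set E}) s1 S * s2 T * ((Fdet S T)%:R / (#|T|)%:R).

Definition is_NE (b1 b2 : nat) (s1 : {ffun {set V} -> R}) (s2 : {ffun {set E} -> R}) : Prop :=
  [/\ mixed1 b1 s1, mixed2 b2 s2,
      (forall t1, mixed1 b1 t1 -> U1 t1 s2 <= U1 s1 s2) &
      (forall t2, mixed2 b2 t2 -> U2 s1 t2 <= U2 s1 s2)].

End Detection.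

(* Main.v *)
Require Import Defs.
From HB Require Import structures.
From mathcomp Require Import all_boot all_order all_algebra.
From mathcomp Require Import ring lra.
Import Order.TTheory GRing.Theory Num.Theory.
Local Open Scope ring_scope.

Section Work.
Variables (R : realFieldType) (V E : finType) (C : V -> {set E}).
Implicit Types (S : {set V}) (T : {set E}).

Definition pp (s1 : {ffun {set V} -> R}) (e : E) : R :=
  \sum_S s1 S * (e \in coverset C S)%:R.
Definition qq (s2 : {ffun {set E} -> R}) (e : E) : R :=
  \sum_T s2 T * (e \in T)%:R.
Definition WW (s2 : {ffun {set E} -> R}) (S : {set V}) : R :=
  \sum_T s2 T * (Fdet C S T)%:R.
Definition HH (s1 : {ffun {set V} -> R}) (T : {set E}) : R :=
  \sum_S s1 S * ((#|T|)%:R - (Fdet C S T)%:R).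
Definition LL (s2 : {ffun {set E} -> R}) : R := \sum_T s2 T * (#|T|)%:R.

Lemma cardR (A : {set E}) : (#|A|)%:R = \sum_e ((e \in A)%:R : R).
Proof.
rewrite -sum1_card natr_sum big_mkcond /=; apply: eq_bigr => e _.
by case: (e \in A).
Qed.

Lemma FdetR S T : ((Fdet C S T)%:R : R) =
  \sum_e (e \in coverset C S)%:R * (e \in T)%:R.
Proof.
rewrite /Fdet cardR; apply: eq_bigr => e _; rewrite inE.
by case: (e \in coverset C S); case: (e \in T); rewrite ?mulr0 ?mulr1 ?mul0r.
Qed.

Lemma WWE (s2 : {ffun {set E} -> R}) S : WW s2 S = \sum_e (e \in coverset C S)%:R * qq s2 e.
Proof.
rewrite /WW /qq.
under eq_bigr => T _ do rewrite FdetR big_distrr.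
rewrite exchange_big; apply: eq_bigr => e _; rewrite big_distrr.
by apply: eq_bigr => T _ /=; ring.
Qed.

Lemma sum_ppE (s1 : {ffun {set V} -> R}) (A : {set E}) :
  \sum_S s1 S * (#|coverset C S :&: A|)%:R = \sum_e (e \in A)%:R * pp s1 e.
Proof.
under eq_bigr => S _ do rewrite -/(Fdet C S A) FdetR big_distrr.
rewrite exchange_big; apply: eq_bigr => e _; rewrite /pp big_distrr.
by apply: eq_bigr => S _ /=; ring.
Qed.

Lemma HHE (s1 : {ffun {set V} -> R}) T : \sum_S s1 S = 1 ->
  HH s1 T = \sum_e (e \in T)%:R * (1 - pp s1 e).
Proof.
move=> h1; rewrite /HH.
under eq_bigr => S _ do rewrite mulrBr.
rewrite sumrB -big_distrl /= h1 mul1r.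
rewrite (sum_ppE s1 T) cardR -sumrB; apply: eq_bigr => e _.
by rewrite mulrBr mulr1.
Qed.

Lemma LLE (s2 : {ffun {set E} -> R}) : LL s2 = \sum_e qq s2 e.
Proof.
rewrite /LL /qq.
under eq_bigr => T _ do rewrite cardR big_distrr.
by rewrite exchange_big.
Qed.

Lemma U1E (s1 : {ffun {set V} -> R}) (s2 : {ffun {set E} -> R}) : U1 C s1 s2 = \sum_S s1 S * WW s2 S.
Proof.
rewrite /U1 /WW; apply: eq_bigr => S _; rewrite big_distrr.
by apply: eq_bigr => T _ /=; ring.
Qed.

Lemma U2E (s1 : {ffun {set V} -> R}) (s2 : {ffun {set E} -> R}) : U2 C s1 s2 = \sum_T s2 T * HH s1 T.
Proof.
rewrite /U2 /HH exchange_big; apply: eq_bigr => T _; rewrite big_distrr.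
by apply: eq_bigr => S _ /=; ring.
Qed.

Lemma U12 (s1 : {ffun {set V} -> R}) (s2 : {ffun {set E} -> R}) : \sum_S s1 S = 1 -> U1 C s1 s2 + U2 C s1 s2 = LL s2.
Proof.
move=> h1; rewrite /U1 /U2 -big_split /=.
under eq_bigr => S _ do rewrite -big_split /=.
under eq_bigr => S _ do under eq_bigr => T _ do rewrite -mulrDr addrC subrK.
under eq_bigr => S _ do under eq_bigr => T _ do rewrite -mulrA.
under eq_bigr => S _ do rewrite -big_distrr /=.
by rewrite -big_distrl /= h1 mul1r.
Qed.


Definition d1 S0 : {ffun {set V} -> R} := [ffun S => (S == S0)%:R].
Definition d2 T0 : {ffun {set E} -> R} := [ffun T => (T == T0)%:R].

Lemma mixed_d1 b1 S0 : (#|S0| <= b1)%N -> mixed1 b1 (d1 S0).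
Proof.
move=> h; split.
- by move=> S; rewrite ffunE ler0n.
- rewrite (bigD1 S0) //= big1 ?ffunE ?eqxx ?addr0 // => S /negbTE hS.
  by rewrite ffunE hS.
- move=> S hS; rewrite ffunE; case: eqP => // eS.
  by move: hS; rewrite eS ltnNge h.
Qed.

Lemma mixed_d2 b2 T0 : (#|T0| <= b2)%N -> mixed2 b2 (d2 T0).
Proof.
move=> h; split.
- by move=> S; rewrite ffunE ler0n.
- rewrite (bigD1 T0) //= big1 ?ffunE ?eqxx ?addr0 // => S /negbTE hS.
  by rewrite ffunE hS.
- move=> S hS; rewrite ffunE; case: eqP => // eS.
  by move: hS; rewrite eS ltnNge h.
Qed.

Lemma U1_d1 S0 (s2 : {ffun {set E} -> R}) : U1 C (d1 S0) s2 = WW s2 S0.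
Proof.
rewrite U1E (bigD1 S0) //= big1 ?ffunE ?eqxx ?addr0 ?mul1r // => S /negbTE hS.
by rewrite ffunE hS mul0r.
Qed.

Lemma U2_d2 T0 (s1 : {ffun {set V} -> R}) : U2 C s1 (d2 T0) = HH s1 T0.
Proof.
rewrite U2E (bigD1 T0) //= big1 ?ffunE ?eqxx ?addr0 ?mul1r // => S /negbTE hS.
by rewrite ffunE hS mul0r.
Qed.

Lemma supp_max (X : finType) (s f : X -> R) :
  (forall x, 0 <= s x) -> \sum_x s x = 1 ->
  (forall x, s x != 0 -> f x <= \sum_y s y * f y) ->
  forall x, s x != 0 -> f x = \sum_y s y * f y.
Proof.
move=> s0 s1 hf x hx.
set M := \sum_y s y * f y.
have h0 : \sum_y s y * (M - f y) = 0.
  under eq_bigr => y _ do rewrite mulrBr.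
  by rewrite sumrB -big_distrl /= s1 mul1r subrr.
have hge : forall y, true -> 0 <= s y * (M - f y).
  move=> y _; have [->|hy] := eqVneq (s y) 0; first by rewrite mul0r.
  by rewrite mulr_ge0 // subr_ge0 hf.
have := psumr_eq0P hge h0 (i := x) isT.
move/eqP; rewrite mulf_eq0 (negbTE hx) /= subr_eq0 => /eqP.
by move=> ->.
Qed.

Lemma U2_unique b1 b2 (s1 t1 : {ffun {set V} -> R}) (s2 t2 : {ffun {set E} -> R}) :
  is_NE C b1 b2 s1 s2 -> is_NE C b1 b2 t1 t2 -> U2 C s1 s2 = U2 C t1 t2.
Proof.
case=> ms1 ms2 h1 h2 [mt1 mt2 k1 k2].
have [_ es1 _] := ms1; have [_ et1 _] := mt1.
have A (x : {ffun {set V} -> R}) (y : {ffun {set E} -> R}) : \sum_S x S = 1 -> U2 C x y = LL y - U1 C x y.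
  by move=> hx; rewrite -(U12 x y hx) addrC addKr.
apply/eqP; rewrite eq_le; apply/andP; split.
- apply: le_trans (k2 s2 ms2).
  rewrite !A //; rewrite lerD2l lerN2; exact: h1.
- apply: le_trans (h2 t2 mt2).
  rewrite !A //; rewrite lerD2l lerN2; exact: k1.
Qed.


Lemma sumIn (A : {set E}) (f : E -> R) :
  \sum_x (x \in A)%:R * f x = \sum_(x in A) f x.
Proof.
rewrite [RHS]big_mkcond /=; apply: eq_bigr => x _.
by case: (x \in A); rewrite ?mul1r ?mul0r.
Qed.

Lemma sum_sub_le (A B : {set E}) (f : E -> R) :
  A \subset B -> (forall x, x \in B -> x \notin A -> 0 <= f x) ->
  \sum_(x in A) f x <= \sum_(x in B) f x.
Proof.
move=> sAB hf; rewrite [X in _ <= X](big_setID A) /= (setIidPr sAB) lerDl.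
apply: sumr_ge0 => x; rewrite inE => /andP [h1 h2]; exact: hf.
Qed.

Lemma HHE' (s1 : {ffun {set V} -> R}) T : \sum_S s1 S = 1 ->
  HH s1 T = \sum_(e in T) (1 - pp s1 e).
Proof. by move=> h; rewrite HHE // sumIn. Qed.

Lemma WWE' (s2 : {ffun {set E} -> R}) S :
  WW s2 S = \sum_(e in coverset C S) qq s2 e.
Proof. by rewrite WWE sumIn. Qed.

Lemma mul_ind_le (a : R) (b : bool) : 0 <= a -> a * b%:R <= a.
Proof. by case: b; rewrite ?mulr1 ?mulr0. Qed.

Lemma pp_bounds b1 (s1 : {ffun {set V} -> R}) e : mixed1 b1 s1 ->
  0 <= pp s1 e <= 1.
Proof.
case=> h0 h1 _; apply/andP; split.
  by apply: sumr_ge0 => S _; rewrite mulr_ge0.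
rewrite -h1; apply: ler_sum => S _.
by case: (e \in _); rewrite ?mulr1 ?mulr0.
Qed.

Lemma qq_bounds b2 (s2 : {ffun {set E} -> R}) e : mixed2 b2 s2 ->
  0 <= qq s2 e <= 1.
Proof.
case=> h0 h1 _; apply/andP; split.
  by apply: sumr_ge0 => S _; rewrite mulr_ge0.
rewrite -h1; apply: ler_sum => S _.
by case: (e \in _); rewrite ?mulr1 ?mulr0.
Qed.

Lemma pp_lt1 b1 (s1 : {ffun {set V} -> R}) S0 e : mixed1 b1 s1 ->
  s1 S0 != 0 -> e \notin coverset C S0 -> pp s1 e < 1.
Proof.
case=> h0 h1 _ hS0 he.
have hp : 0 < s1 S0 by rewrite lt0r hS0 h0.
rewrite /pp (bigD1 S0) //= (negbTE he) mulr0 add0r.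
have e1 : s1 S0 + \sum_(i | i != S0) s1 i = 1 by rewrite -h1 [RHS](bigD1 S0).
apply: (le_lt_trans (y := \sum_(i | i != S0) s1 i)).
  by apply: ler_sum => S _; apply: mul_ind_le.
by rewrite -e1 ltrDr.
Qed.

Lemma packing_le (P : {set E}) S : is_set_packing C P ->
  (#|coverset C S :&: P| <= #|S|)%N.
Proof.
move=> /forallP hP.
have hf : forall e, e \in coverset C S :&: P -> exists2 i, i \in S & e \in C i.
  by move=> e; rewrite inE => /andP [/bigcupP [i hi he] _]; exists i.
case: (pickP (mem S)) => [i0 _|h0]; last first.
  have -> : coverset C S :&: P = set0.
    apply/eqP; rewrite -subset0; apply/subsetP => e.
    rewrite inE => /andP [/bigcupP [i hi _] _].
    by move: (h0 i); rewrite /= hi.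
  by rewrite cards0.
pose f e := odflt i0 [pick i in S | e \in C i].
have fP : forall e, e \in coverset C S :&: P -> f e \in S /\ e \in C (f e).
  move=> e he; rewrite /f; case: pickP => [i /andP [h1 h2]|hn] //=.
  by have [i hi hC] := hf e he; move: (hn i); rewrite hi hC.
rewrite -(card_in_imset (f := f)); last first.
  move=> x y hx hy exy.
  have [hx1 hx2] := fP x hx; have [hy1 hy2] := fP y hy.
  have /card_le1_eqP H := hP (f x).
  have xP : x \in C (f x) :&: P by rewrite inE hx2; move: hx; rewrite inE => /andP [].
  have yP : y \in C (f x) :&: P by rewrite inE exy hy2; move: hy; rewrite inE => /andP [].
  by apply/esym; apply: H.
apply: subset_leq_card; apply/subsetP => i /imsetP [e he ->].
by have [] := fP e he.
Qed.


Lemma cover_setT : (forall e : E, exists i : V, e \in C i) -> is_set_cover C [set: V].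
Proof.
move=> hc; rewrite /is_set_cover eqEsubset subsetT /=; apply/subsetP => e _.
by have [i hi] := hc e; apply/bigcupP; exists i.
Qed.

Lemma nstar_le S : is_set_cover C S -> (nstar C <= #|S|)%N.
Proof.
move=> h; rewrite /nstar.
have : S \in index_enum {set V} by rewrite mem_index_enum.
elim: (index_enum _) => [//|a r IH]; rewrite inE big_cons.
case/orP => [/eqP <-|hr]; first by rewrite h geq_minl.
case: (is_set_cover C a); last exact: IH.
by rewrite geq_min IH ?orbT.
Qed.

Lemma nstar_ex : (forall e : E, exists i : V, e \in C i) ->
  exists K, is_set_cover C K /\ #|K| = nstar C.
Proof.
move=> hc; rewrite /nstar.
apply: (big_ind (fun x => exists K, is_set_cover C K /\ #|K| = x)).
- by exists [set: V]; rewrite cover_setT // cardsT.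
- move=> x y [K1 [h1 e1]] [K2 [h2 e2]]; rewrite /minn.
  by case: ltnP => _; [exists K1|exists K2].
- by move=> S hS; exists S.
Qed.

Lemma mstar_ex : exists P, is_set_packing C P /\ #|P| = mstar C.
Proof.
rewrite /mstar.
apply: (big_ind (fun x => exists K, is_set_packing C K /\ #|K| = x)).
- exists set0; rewrite cards0; split => //; apply/forallP => i.
  by rewrite setI0 cards0.
- move=> x y [K1 [h1 e1]] [K2 [h2 e2]]; rewrite /maxn.
  by case: ltnP => _; [exists K2|exists K1].
- by move=> S hS; exists S.
Qed.

Lemma mstar_ge P : is_set_packing C P -> (#|P| <= mstar C)%N.
Proof. by move=> h; rewrite /mstar (bigD1 P) //= leq_maxl. Qed.


Lemma LL_le b2 (s2 : {ffun {set E} -> R}) : mixed2 b2 s2 -> LL s2 <= b2%:R.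
Proof.
case=> h0 h1 h2.
have e : \sum_T s2 T * b2%:R = b2%:R by rewrite -big_distrl /= h1 mul1r.
rewrite -e; apply: ler_sum => T _; case: (ltnP b2 #|T|) => hT.
  by rewrite h2 // !mul0r.
by apply: ler_wpM2l => //; rewrite ler_nat.
Qed.

Lemma supp_adm1 b1 (s1 : {ffun {set V} -> R}) S : mixed1 b1 s1 -> s1 S != 0 -> (#|S| <= b1)%N.
Proof. by case=> _ _ h hS; rewrite leqNgt; apply/negP => /h; apply/eqP. Qed.

Lemma supp_adm2 b2 (s2 : {ffun {set E} -> R}) T : mixed2 b2 s2 -> s2 T != 0 -> (#|T| <= b2)%N.
Proof. by case=> _ _ h hS; rewrite leqNgt; apply/negP => /h; apply/eqP. Qed.

Lemma cover_mono (X Y : {set V}) : X \subset Y -> coverset C X \subset coverset C Y.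
Proof.
move=> sXY; apply/subsetP => e /bigcupP [i hi he]; apply/bigcupP; exists i => //.
exact: (subsetP sXY).
Qed.

Lemma LL_b2 b1 b2 (s1 : {ffun {set V} -> R}) (s2 : {ffun {set E} -> R}) :
  (forall e : E, exists i : V, e \in C i) ->
  (b1 < nstar C)%N -> (b2 < mstar C)%N ->
  is_NE C b1 b2 s1 s2 -> LL s2 = b2%:R.
Proof.
move=> hcov hb1n hb2m [ms1 ms2 h1 h2].
have [s1ge s1sum s1b] := ms1; have [s2ge s2sum s2b] := ms2.
apply/eqP; rewrite eq_le LL_le //=; rewrite leNgt; apply/negP => hlt.
have hW S : (#|S| <= b1)%N -> WW s2 S <= U1 C s1 s2.
  by move=> hS; rewrite -U1_d1; apply: h1; apply: mixed_d1.
have hH T : (#|T| <= b2)%N -> HH s1 T <= U2 C s1 s2.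
  by move=> hT; rewrite -U2_d2; apply: h2; apply: mixed_d2.
have supp1 S : s1 S != 0 -> WW s2 S = U1 C s1 s2.
  rewrite U1E; apply: (@supp_max _ s1 (WW s2)) => // x hx.
  by rewrite -U1E; apply: hW; apply: supp_adm1 _ _ _ ms1 hx.
have supp2 T : s2 T != 0 -> HH s1 T = U2 C s1 s2.
  rewrite U2E; apply: (@supp_max _ s2 (HH s1)) => // x hx.
  by rewrite -U2E; apply: hH; apply: supp_adm2 _ _ _ ms2 hx.
pose g x := 1 - pp s1 x.
have g0 x : 0 <= g x by rewrite subr_ge0; case/andP: (pp_bounds _ _ x ms1).
have HHg T : HH s1 T = \sum_(x in T) g x by rewrite HHE'.
have [T0 [hT0 hT0s]] : exists T0, s2 T0 != 0 /\ (#|T0| < b2)%N.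
  case: (pickP (fun T => (s2 T != 0) && (#|T| < b2)%N)) => [T /andP [a b]|hn].
    by exists T.
  have e : \sum_T s2 T * b2%:R = b2%:R by rewrite -big_distrl /= s2sum mul1r.
  move: hlt; rewrite /LL -e (eq_bigr (fun T => s2 T * b2%:R)) ?ltxx // => T _.
  have := hn T; rewrite /=; have [->|hz] := eqVneq (s2 T) 0; first by rewrite !mul0r.
  move=> /negbT; rewrite -leqNgt => hb; congr (_ * _); congr (_%:R).
  by apply/eqP; rewrite eqn_leq hb (supp_adm2 _ _ _ ms2 hz).
have out0 e : e \notin T0 -> g e <= 0.
  move=> he; have := hH (e |: T0).
  rewrite cardsU1 he add1n => /(_ hT0s).
  by rewrite -(supp2 _ hT0) !HHg big_setU1 //= gerDr.
have [S0 hS0] : exists S0, s1 S0 != 0.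
  case: (pickP (fun S => s1 S != 0)) => [S hS|hn]; first by exists S.
  move: s1sum; rewrite big1 => [/eqP|S _]; first by rewrite eq_sym oner_eq0.
  by have := hn S; rewrite /= => /negbFE/eqP.
have gpos d : d \notin coverset C S0 -> 0 < g d.
  by move=> hd; rewrite subr_gt0; apply: pp_lt1 ms1 hS0 hd.
have cov0 e : e \notin coverset C S0 -> e \in T0.
  move=> he; apply/negPn/negP => hT; have := out0 _ hT.
  by rewrite leNgt gpos.
have qd d : d \notin coverset C S0 -> qq s2 d = 1.
  move=> hd.
  have inT T : s2 T != 0 -> d \in T.
    move=> hT; apply/negPn/negP => hdT.
    have eH : HH s1 T = HH s1 T0 by rewrite !supp2.
    have a1 : \sum_(x in T) g x <= \sum_(x in T :&: T0) g x.
      rewrite (big_setID T0) /= gerDl; apply: sumr_le0 => x.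
      by rewrite inE => /andP [hx _]; apply: out0.
    have a2 : \sum_(x in d |: (T :&: T0)) g x <= \sum_(x in T0) g x.
      apply: sum_sub_le => [|x _ _ //]; apply/subsetP => x.
      by rewrite !inE => /orP [/eqP ->|/andP [_ ->]] //; apply: cov0.
    move: a2; rewrite big_setU1 /=; last by rewrite inE negb_and hdT.
    move=> a2.
    have a3 : g d + \sum_(x in T) g x <= g d + \sum_(x in T :&: T0) g x.
      by rewrite lerD2l.
    have := le_trans a3 a2.
    by rewrite -!HHg -eH gerDr leNgt gpos.
  rewrite /qq -[RHS]s2sum; apply: eq_bigr => T _.
  have [->|hz] := eqVneq (s2 T) 0; first by rewrite mul0r.
  by rewrite inT //= mulr1.
have qpos x : 0 <= qq s2 x by case/andP: (qq_bounds _ _ x ms2).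
have hS0b : (#|S0| <= b1)%N := supp_adm1 _ _ _ ms1 hS0.
have [d hd] : exists d, d \notin coverset C S0.
  case: (pickP (fun d => d \notin coverset C S0)) => [d hd|hn]; first by exists d.
  have hc : is_set_cover C S0.
    rewrite /is_set_cover eqEsubset subsetT /=; apply/subsetP => e _.
    by have := hn e; rewrite /= => /negbFE.
  by have := leq_trans (nstar_le _ hc) hS0b; rewrite leqNgt hb1n.
have [v hv] := hcov d.
have vS0 : v \notin S0 by apply: contra hd => hv0; apply/bigcupP; exists v.
pose U u := coverset C S0 :\: coverset C (S0 :\ u).
have key u : u \in S0 -> 1 <= \sum_(x in U u) qq s2 x.
  move=> hu.
  have hvU : v \notin S0 :\ u by rewrite inE negb_and vS0 orbT.
  have ecard : #|v |: (S0 :\ u)| = #|S0| by rewrite cardsU1 hvU (cardsD1 u S0) hu.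
  have hle : WW s2 (v |: (S0 :\ u)) <= WW s2 S0 by rewrite (supp1 S0 hS0); apply: hW; rewrite ecard.
  have sub1 : d |: coverset C (S0 :\ u) \subset coverset C (v |: (S0 :\ u)).
    apply/subsetP => x /setU1P [->|/bigcupP [i hi hx]]; apply/bigcupP.
      by exists v; rewrite ?setU11.
    by exists i; rewrite // setU1r.
  have hdU : d \notin coverset C (S0 :\ u).
    by apply: contra hd; apply: (subsetP (cover_mono _ _ _)); apply: subD1set.
  have hle' : \sum_(x in coverset C (v |: (S0 :\ u))) qq s2 x <= WW s2 S0 by rewrite -WWE'.
  have := le_trans (sum_sub_le _ _ _ sub1 (fun x _ _ => qpos x)) hle'.
  rewrite WWE' big_setU1 //= qd //.
  have split : \sum_(x in coverset C S0) qq s2 x =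
    \sum_(x in coverset C (S0 :\ u)) qq s2 x + \sum_(x in U u) qq s2 x.
    rewrite (big_setID (coverset C (S0 :\ u))) /= (setIidPr _) //.
    by apply: cover_mono; apply: subD1set.
  rewrite split; lra.
have cnt x : \sum_(u in S0) ((x \in U u)%:R : R) <= (x \in coverset C S0)%:R.
  case: (pickP (fun u => (u \in S0) && (x \in U u))) => [u0 /andP [hu0 hx0]|hn]; last first.
    rewrite big1 ?ler0n // => u hu.
    by move: (hn u); rewrite /= hu /= => ->.
  have xc : x \in coverset C S0 by move: hx0; rewrite inE => /andP [].
  rewrite xc (bigD1 u0) //= hx0 big1 ?addr0 // => u /andP [hu hne].
  case: (boolP (x \in U u)) => // hxu; exfalso.
  have xu : x \in C u.
    move: hxu; rewrite inE => /andP [hn1 /bigcupP [i hi hxi]].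
    case: (eqVneq i u) => [<-//|hiu].
    by case/negP: hn1; apply/bigcupP; exists i; rewrite // !inE hiu.
  move: hx0; rewrite inE => /andP [hn0 _]; case/negP: hn0; apply/bigcupP.
  by exists u => //; rewrite !inE hne hu.
have WWge : (#|S0|)%:R <= \sum_(x in coverset C S0) qq s2 x.
  rewrite -sum1_card natr_sum (eq_bigr (fun _ => 1)) //.
  apply: le_trans (ler_sum _ key) _.
  under eq_bigr => u _ do rewrite -sumIn.
  rewrite exchange_big /= -sumIn; apply: ler_sum => x _.
  by rewrite -big_distrl /=; apply: ler_wpM2r; [exact: qpos|exact: cnt].
have eLL : LL s2 = \sum_(x in coverset C S0) qq s2 x + (#|~: coverset C S0|)%:R.
  rewrite LLE (bigID (fun x => x \in coverset C S0)) /=; congr (_ + _).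
  rewrite (eq_bigr (fun _ => 1)) => [|x hx]; last exact: qd.
  by rewrite -sum1_card natr_sum; apply: eq_bigl => x; rewrite !inE.
have [P [hP ePm]] := mstar_ex.
have hPle : (#|P| <= #|S0| + #|~: coverset C S0|)%N.
  rewrite -(cardsID (coverset C S0) P) leq_add //.
    by rewrite setIC packing_le.
  by apply: subset_leq_card; apply/subsetP => x; rewrite !inE => /andP [].
have hm : (mstar C)%:R <= LL s2.
  rewrite -ePm eLL; apply: le_trans (_ : (#|S0| + #|~: coverset C S0|)%:R <= _).
    by rewrite ler_nat.
  by rewrite natrD lerD2r.
have := lt_le_trans (le_lt_trans hm hlt) (lexx _).
by rewrite ltr_nat ltnNge ltnW.
Qed.


Lemma avg_subset (X : finType) (x : X -> R) b (A : {set X}) : (b <= #|A|)%N ->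
  exists B : {set X}, [/\ B \subset A, #|B| = b &
    b%:R * \sum_(i in A) x i <= (#|A|)%:R * \sum_(i in B) x i].
Proof.
have [n] := ubnP #|A|; elim: n A => // n IH A hA hb.
case: (eqVneq b #|A|) => [->|hne]; first by exists A; split.
case: b hb hne IH => [|b] hb hne IH.
  by exists set0; rewrite sub0set cards0 mul0r big_set0 mulr0.
have hlt : (b.+1 < #|A|)%N by rewrite ltn_neqAle hne hb.
have [a0 ha0] : exists a0, a0 \in A.
  by apply/set0Pn; rewrite -card_gt0; apply: leq_trans hlt.
case: (arg_minP x ha0) => a ha hmin.
have {}ha : a \in A by []. 
have eA : #|A| = (#|A :\ a|).+1 by rewrite (cardsD1 a A) ha.
have i1 : (#|A :\ a| < n)%N by move: hA; rewrite eA ltnS.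
have i2 : (b.+1 <= #|A :\ a|)%N by move: hlt; rewrite eA ltnS.
have [B [sB cB hB]] := IH (A :\ a) i1 i2.
exists B; split => //; first by apply: (subset_trans sB); apply: subD1set.
rewrite (big_setD1 a ha) /= eA.
have h2 : (#|A :\ a|)%:R * x a <= \sum_(i in A :\ a) x i.
  rewrite mulr_natl -sumr_const; apply: ler_sum => i.
  by rewrite inE => /andP [_ hi]; apply: hmin.
have hn : 1 <= (#|A :\ a|)%:R :> R.
  by rewrite ler1n; move: hlt; rewrite eA ltnS; apply: leq_trans.
have hb0 : 0 <= b.+1%:R :> R by rewrite ler0n.
rewrite -[(#|A :\ a|).+1%:R]natr1.
move: hB h2 hn hb0.
set SA := \sum_(i in A :\ a) x i; set SB := \sum_(i in B) x i.
set m := (#|A :\ a|)%:R; set bb := b.+1%:R.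
move=> hB h2 hn hb0.
nra.
Qed.


Lemma NE_bounds b1 b2 (s1 : {ffun {set V} -> R}) (s2 : {ffun {set E} -> R}) :
  (forall e : E, exists i : V, e \in C i) ->
  (b1 < nstar C)%N -> (b2 < mstar C)%N ->
  is_NE C b1 b2 s1 s2 ->
  [/\ LL s2 = b2%:R, (b1 * b2)%:R <= (nstar C)%:R * U1 C s1 s2,
      b2%:R * ((mstar C)%:R - b1%:R) <= (mstar C)%:R * U2 C s1 s2,
      0 <= U2 C s1 s2 & U1 C s1 s2 + U2 C s1 s2 = b2%:R].
Proof.
move=> hcov hb1n hb2m hNE.
have eLL := LL_b2 _ _ _ _ hcov hb1n hb2m hNE.
case: hNE => ms1 ms2 h1 h2.
have [s1ge s1sum s1b] := ms1; have [s2ge s2sum s2b] := ms2.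
have hW S : (#|S| <= b1)%N -> WW s2 S <= U1 C s1 s2.
  by move=> hS; rewrite -U1_d1; apply: h1; apply: mixed_d1.
have hH T : (#|T| <= b2)%N -> HH s1 T <= U2 C s1 s2.
  by move=> hT; rewrite -U2_d2; apply: h2; apply: mixed_d2.
have qpos x : 0 <= qq s2 x by case/andP: (qq_bounds _ _ x ms2).
split => //.
-
  have [K [hK eK]] := nstar_ex hcov.
  have [v0 hv0] : exists v0, v0 \in K.
    by apply/set0Pn; rewrite -card_gt0 eK; apply: leq_ltn_trans hb1n.
  pose f e := odflt v0 [pick i in K | e \in C i].
  have fP e : f e \in K /\ e \in C (f e).
    rewrite /f; case: pickP => [i /andP [h3 h4]|hn] //=.
    have : e \in coverset C K by rewrite (eqP hK) inE.
    by case/bigcupP => i hi he; move: (hn i); rewrite /= hi he.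
  pose Q k := \sum_e (f e == k)%:R * qq s2 e.
  have sumQ (B : {set V}) : \sum_(k in B) Q k = \sum_e (f e \in B)%:R * qq s2 e.
    rewrite exchange_big /=; apply: eq_bigr => e _; rewrite -big_distrl /=.
    congr (_ * _); case: (boolP (f e \in B)) => hfe.
      rewrite (bigD1 (f e)) //= eqxx big1 ?addr0 // => k /andP [_ hk].
      by rewrite eq_sym (negbTE hk).
    rewrite big1 // => k hk; case: eqP => // ek.
    by move: hfe; rewrite ek hk.
  have hbK : (b1 <= #|K|)%N by rewrite eK ltnW.
  have [B [sB cB hB]] := avg_subset _ Q b1 K hbK.
  move: hB; rewrite sumQ eK.
  have -> : \sum_e (f e \in K)%:R * qq s2 e = LL s2.
    by rewrite LLE; apply: eq_bigr => e _; have [-> _] := fP e; rewrite mul1r.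
  rewrite eLL sumQ => hB; rewrite natrM; apply: le_trans hB _.
  rewrite ler_wpM2l //; apply: le_trans (hW B _); last by rewrite cB.
  rewrite WWE; apply: ler_sum => e _; apply: ler_wpM2r => //.
  case: (boolP (f e \in B)) => // hfe.
  have [_ he] := fP e.
  suff -> : e \in coverset C B by [].
  by apply/bigcupP; exists (f e).
-
  have [P [hP eP]] := mstar_ex.
  pose g x := 1 - pp s1 x.
  have hbP : (b2 <= #|P|)%N by rewrite eP ltnW.
  have [B [sB cB hB]] := avg_subset _ g b2 P hbP.
  move: hB; rewrite eP => hB.
  have hHB : \sum_(i in B) g i <= U2 C s1 s2.
    by rewrite -HHE' //; apply: hH; rewrite cB.
  have hpP : \sum_(i in P) pp s1 i <= b1%:R.
    rewrite -sumIn -sum_ppE.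
    have e : \sum_S s1 S * b1%:R = b1%:R by rewrite -big_distrl /= s1sum mul1r.
    rewrite -[X in _ <= X]e; apply: ler_sum => S _.
    have [->|hz] := eqVneq (s1 S) 0; first by rewrite !mul0r.
    apply: ler_wpM2l => //; rewrite ler_nat.
    exact: leq_trans (packing_le _ _ hP) (supp_adm1 _ _ _ ms1 hz).
  have egP : \sum_(i in P) g i = (mstar C)%:R - \sum_(i in P) pp s1 i.
    by rewrite /g sumrB sumr_const eP -[_ *+ _]mulr_natl mulr1.
  move: hB hHB hpP; rewrite egP.
  have hb20 : 0 <= b2%:R :> R by rewrite ler0n.
  have hm0 : 0 <= (mstar C)%:R :> R by rewrite ler0n.
  move: hb20 hm0.
  set M := (mstar C)%:R; set SP := \sum_(i in P) pp s1 i.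
  set SB := \sum_(i in B) g i; set u := U2 C s1 s2.
  move=> *; nra.
- apply: le_trans (hH set0 _); last by rewrite cards0.
  by rewrite HHE' // big_set0.
- by rewrite U12.
Qed.


Lemma rate_eq b2 (s1 : {ffun {set V} -> R}) (s2 : {ffun {set E} -> R}) :
  mixed2 b2 s2 -> LL s2 = b2%:R ->
  detection_rate C s1 s2 = U1 C s1 s2 / b2%:R.
Proof.
move=> ms2 eLL; have [s2ge s2sum s2b] := ms2.
have hsz T : s2 T != 0 -> #|T| = b2.
  move=> hz.
  have e : \sum_T s2 T * b2%:R = b2%:R by rewrite -big_distrl /= s2sum mul1r.
  have h0 : \sum_T s2 T * (b2%:R - (#|T|)%:R) = 0.
    under eq_bigr => T' _ do rewrite mulrBr.
    by rewrite sumrB e -eLL /LL subrr.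
  have hge : forall T', true -> 0 <= s2 T' * (b2%:R - (#|T'|)%:R).
    move=> T' _; have [->|hz'] := eqVneq (s2 T') 0; first by rewrite mul0r.
    by rewrite mulr_ge0 // subr_ge0 ler_nat (supp_adm2 _ _ _ ms2 hz').
  have := psumr_eq0P hge h0 (i := T) isT.
  move/eqP; rewrite mulf_eq0 (negbTE hz) /= subr_eq0 eqr_nat => /eqP.
  by move=> ->.
rewrite /detection_rate /U1 mulr_suml; apply: eq_bigr => S _.
rewrite mulr_suml; apply: eq_bigr => T _.
have [->|hz] := eqVneq (s2 T) 0; first by rewrite mulr0 !mul0r.
by rewrite (hsz T hz) mulrA.
Qed.

End Work.

Theorem theorem1 (R : realFieldType) (V E : finType) (C : V -> {set E})
    (b1 b2 : nat)
    (hV : (0 < #|V|)%N) (hE : (0 < #|E|)%N)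
    (hcov : forall e : E, exists i : V, e \in C i)
    (hb1 : (0 < b1)%N) (hb2 : (0 < b2)%N)
    (hb1n : (b1 < nstar C)%N) (hb2m : (b2 < mstar C)%N) :
  (forall (s1 t1 : {ffun {set V} -> R}) (s2 t2 : {ffun {set E} -> R}),
      is_NE C b1 b2 s1 s2 -> is_NE C b1 b2 t1 t2 ->
      [/\ U1 C s1 s2 = U1 C t1 t2, U2 C s1 s2 = U2 C t1 t2 &
          detection_rate C s1 s2 = detection_rate C t1 t2])
  /\
  (forall (s1 : {ffun {set V} -> R}) (s2 : {ffun {set E} -> R}),
      is_NE C b1 b2 s1 s2 ->
      [/\ (b1 * b2)%:R / (nstar C)%:R <= U1 C s1 s2,
          U1 C s1 s2 <= Num.min ((b1 * b2)%:R / (mstar C)%:R) (b2%:R : R),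
          Num.max 0 (b2%:R * (1 - b1%:R / (mstar C)%:R)) <= U2 C s1 s2 &
          U2 C s1 s2 <= b2%:R * (1 - b1%:R / (nstar C)%:R)] /\
      (b1%:R / (nstar C)%:R <= detection_rate C s1 s2 /\
          detection_rate C s1 s2 <= Num.min (b1%:R / (mstar C)%:R) 1)).
Proof.
split.
- move=> s1 t1 s2 t2 hs ht.
  have [e1 _ _ _ u1] := @NE_bounds R V E C b1 b2 s1 s2 hcov hb1n hb2m hs.
  have [e2 _ _ _ u2] := @NE_bounds R V E C b1 b2 t1 t2 hcov hb1n hb2m ht.
  have eU2 := @U2_unique R V E C b1 b2 s1 t1 s2 t2 hs ht.
  have eU1 : U1 C s1 s2 = U1 C t1 t2.
    by apply: (addIr (U2 C s1 s2)); rewrite u1 eU2 u2.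
  split => //.
  case: hs => _ ms2 _ _; case: ht => _ mt2 _ _.
  by rewrite (@rate_eq R V E C b2 s1 s2 ms2 e1) (@rate_eq R V E C b2 t1 t2 mt2 e2) eU1.
- move=> s1 s2 hs.
  have [e1 hA hB hC hD] := @NE_bounds R V E C b1 b2 s1 s2 hcov hb1n hb2m hs.
  have er := @rate_eq R V E C b2 s1 s2 (let: And4 _ m _ _ := hs in m) e1.
  have hN : 0 < (nstar C)%:R :> R by rewrite ltr0n; apply: leq_ltn_trans hb1n.
  have hM : 0 < (mstar C)%:R :> R by rewrite ltr0n; apply: leq_ltn_trans hb2m.
  have hb2R : 0 < b2%:R :> R by rewrite ltr0n.
  have hb1R : 0 < b1%:R :> R by rewrite ltr0n.
  move: hA hB hC hD; rewrite natrM er.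
  set N := (nstar C)%:R; set M := (mstar C)%:R.
  set x1 := b1%:R; set x2 := b2%:R.
  set u1 := U1 C s1 s2; set u2 := U2 C s1 s2.
  move=> hA hB hC hD.
  have dN : N * (x1 / N) = x1 by rewrite mulrC divfK // gt_eqF.
  have dM : M * (x1 / M) = x1 by rewrite mulrC divfK // gt_eqF.
  have dN2 : x1 * x2 / N = x2 * (x1 / N) by rewrite mulrA [x1 * x2]mulrC.
  have dM2 : x1 * x2 / M = x2 * (x1 / M) by rewrite mulrA [x1 * x2]mulrC.
  have dr : u1 / x2 * x2 = u1 by rewrite divfK // gt_eqF.
  rewrite dN2 dM2.
  move: (x1 / N) (x1 / M) (u1 / x2) dN dM dr => a c r dN dM dr.
  rewrite le_min ge_max le_min.
  split; first split.
  + nra.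
  + apply/andP; split; nra.
  + apply/andP; split; nra.
  + nra.
  + have hu1 : u1 <= x2 * c by nra.
    have hu2 : u1 <= x2 by nra.
    split.
      have hNx : 0 < N * x2 by rewrite mulr_gt0.
      rewrite -(ler_pM2r hNx).
      have -> : a * (N * x2) = x1 * x2 by rewrite mulrA [a * N]mulrC dN.
      have -> : r * (N * x2) = N * u1 by rewrite mulrCA -dr mulrC.
      exact: hA.
    apply/andP; split.
      by rewrite -(ler_pM2r hb2R) dr mulrC.
    by rewrite -(ler_pM2r hb2R) dr mul1r.
Qed.
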